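(* Let $p,q$ be integers with $2\le q<p$ and $q\mid p$, and let $s=\frac{\log q}{\log p}$. There exist uncountably many regular mappings $\tau$ with $\max_{n\ge1}\ell_n<\infty$, giving pairwise distinct sets $\Lambda(\tau)$ (regular spectra of $\mu_{p,q}$), such that $D_s^+(\Lambda(\tau))>0$.
   Context: $\mu_{p,q}$ denotes the self-similar probability measure on $\mathbb R$ satisfying $\mu=\frac1q\sum_{d\in\mathcal D}\mu\circ f_d^{-1}$ with $f_d(x)=p^{-1}(x+d)$ and $\mathcal D=\frac pq\{0,1,\ldots,q-1\}$. Upper $r$-Beurling density: for a countable $\Lambda\subseteq\mathbb R$ and $r>0$, $D_r^+(\Lambda)=\limsup_{h\to\infty}\sup_{x\in\mathbb R}\frac{\#(\Lambda\cap B(x,h))}{h^r}$, where $B(x,h)=(x-h,x+h)$. Let $\Sigma_q=\{0,1,\ldots,q-1\}$, $\Sigma_q^n$ the words of length $n$, and $\Sigma_q^\ast=\bigcup_{n\ge1}\Sigma_q^n$. A map $\tau:\Sigma_q^\ast\to\{-1,0,\ldots,p-2\}$ is a regular mapping if (i) $\tau(0^n)=0$ for all $n\ge1$; (ii) $\tau(i_1\cdots i_n)\in i_n+q\mathbb Z$ for every word $i_1\cdots i_n$; (iii) for every $I\in\Sigma_q^\ast$, $\tau(I0^l)=0$ for all sufficiently large $l$. For each $n\ge1$ write $n=i_1+i_2q+\cdots+i_Nq^{N-1}$ with $i_N\ne0$ and $I=i_1\cdots i_N$. Set $\lambda_0=0$ and $\lambda_n=\tau(I|_1)+\tau(I|_2)p+\cdots+\tau(I|_N)p^{N-1}+\sum_{k=N}^\infty\tau(I0^{k-N+1})p^k$,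 where $I|_j=i_1\cdots i_j$; let $\Lambda(\tau)=\{\lambda_n\}_{n\ge0}$ and $\ell_n=\#\{k\ge1:\tau(I0^k)\ne0\}$. A regular spectrum is a set $\Lambda(\tau)$ with $\tau$ regular and $\max_{n\ge1}\ell_n<\infty$; by a known result (Dai–He–Lai) such sets are spectra of $\mu_{p,q}$, i.e. $\{e^{2\pi i\lambda x}\}_{\lambda\in\Lambda(\tau)}$ is an orthonormal basis of $L^2(\mu_{p,q})$. *)

(* Defs.v *)
From HB Require Import structures.
From mathcomp Require Import all_boot all_order all_algebra.
From mathcomp Require Import all_classical all_reals all_analysis.
Set Implicit Arguments. Unset Strict Implicit. Unset Printing Implicit Defensive.
Import Order.TTheory GRing.Theory Num.Theory numFieldNormedType.Exports.
Local Open Scope classical_set_scope.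
Local Open Scope ring_scope.

(* Words over Sigma_q are lists of naturals; a word i_1 ... i_n is the list
   [:: i_1; ...; i_n] (i_1 first).  A mapping tau : Sigma_q^* -> Z is a
   function on lists; only its values on valid words matter. *)
Definition word_ok (q : nat) (w : seq nat) : bool :=
  (w != [::]) && all (fun i => i < q)%N w.

Definition last_digit (w : seq nat) : nat := last 0%N w.

Definition regular_mapping (p q : nat) (tau : seq nat -> int) : Prop :=
  [/\ (forall w, word_ok q w -> (-1 <= tau w)%R /\ (tau w <= (p%:Z - 2))%R),
      (forall n, (1 <= n)%N -> tau (nseq n 0%N) = 0),
      (forall w, word_ok q w -> (q%:Z %| (tau w - (last_digit w)%:Z))%Z) &
      (forall w, word_ok q w -> exists L : nat, forall l, (L <= l)%N ->
          tau (w ++ nseq l 0%N) = 0)].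

(* base-q digits of n, least significant first: n = i_1 + i_2 q + ... ,
   with last digit nonzero (empty list for n = 0). *)
Fixpoint digits_aux (q fuel n : nat) : seq nat :=
  match fuel with
  | 0%N => [::]
  | fuel'.+1 => if n == 0%N then [::] else (n %% q)%N :: digits_aux q fuel' (n %/ q)%N
  end.
Definition digits (q n : nat) : seq nat := digits_aux q n n.

Definition lambda_seq (R : realType) (p q : nat) (tau : seq nat -> int) (n : nat) : R :=
  if n == 0%N then 0 else
  let I := digits q n in
  let N := size I in
  \sum_(1 <= j < N.+1) (tau (take j I))%:~R * (p%:R ^+ j.-1)
  + limn (fun M : nat =>
      \sum_(N <= k < M) ((tau (I ++ nseq (k - N).+1 0%N))%:~R * (p%:R ^+ k) : R)).

Definition Lambda (R : realType) (p q : nat) (tau : seq nat -> int) : set R :=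
  range (lambda_seq R p q tau).

(* ell_n <= M, where ell_n = #{k >= 1 : tau(I 0^k) <> 0}: every finite
   truncation {1,...,K} contains at most M such k. *)
Definition ell_le (p q : nat) (tau : seq nat -> int) (n M : nat) : Prop :=
  forall K : nat,
    (count (fun k => tau (digits q n ++ nseq k 0%N) != 0) (iota 1 K) <= M)%N.

Definition bounded_ell (p q : nat) (tau : seq nat -> int) : Prop :=
  exists M : nat, forall n : nat, (1 <= n)%N -> ell_le p q tau n M.

(* upper r-Beurling density, as an extended real:
   limsup_{h -> oo} sup_x #(L ∩ (x-h, x+h)) / h^r *)
Definition upper_beurling_density (R : realType) (r : R) (L : set R) : \bar R :=
  limf_esup
    (fun h : R => ereal_sup [set ((\esum_(y in L `&` [set y : R | (x - h < y < x + h)%R]) 1%E)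
                                    * ((h `^ r)^-1)%:E)%E | x in [set: R]])
    (pinfty_nbhs R).

(* Main.v *)
Require Import Defs.
From HB Require Import structures.
From mathcomp Require Import all_boot all_order all_algebra.
From mathcomp Require Import all_classical all_reals all_analysis.
From mathcomp Require Import zify ring lra.
Import Order.TTheory GRing.Theory Num.Theory.
Local Open Scope classical_set_scope.
Local Open Scope ring_scope.

Definition spec (q : nat) (c : nat -> bool) (w : seq nat) : bool :=
  (w == rcons (nseq (size w).-1 0%N) q.-1) && c (size w).-1.
Definition tc (q : nat) (c : nat -> bool) (w : seq nat) : int :=
  if spec q c w then -1 else (last_digit w)%:Z.
Definition Pw (p : nat) (t : seq nat -> int) (I : seq nat) : int :=
  \sum_(1 <= j < (size I).+1) t (take j I) * (p%:Z ^+ j.-1).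
Fixpoint valn (p : nat) (I : seq nat) : nat :=
  if I is d :: I' then (d + p * valn p I')%N else 0%N.
Definition shiftc (c : nat -> bool) := fun m => c m.+1.
Definition cb (b : nat -> bool) : nat -> bool :=
  fun m => if m is m'.+1 then b m' else false.

Lemma Pw_nil p t : Pw p t [::] = 0.
Proof. by rewrite /Pw big_geq. Qed.

Lemma Pw_cons p t d I :
  Pw p t (d :: I) = t [:: d] + p%:Z * Pw p (fun w => t (d :: w)) I.
Proof.
rewrite /Pw /= big_nat_recl // expr0 mulr1 /= take0; congr (_ + _).
rewrite mulr_sumr; apply: eq_big_nat => i /andP[i1 _].
case: i i1 => // i _ /=; rewrite exprS; ring.
Qed.

Lemma Pw_ext p t1 t2 I : (forall w, w != [::] -> t1 w = t2 w) ->
  Pw p t1 I = Pw p t2 I.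
Proof.
move=> e; rewrite /Pw; apply: eq_big_nat => i /andP[i1 iI]; rewrite e //.
rewrite -size_eq0 size_take; case: ifP => h; apply/negP => /eqP h2; [lia|].
by move: iI i1 h; rewrite h2; case: i.
Qed.

Lemma last_spec q c w : spec q c w -> last_digit w = q.-1.
Proof. by case/andP => /eqP -> _; rewrite /last_digit last_rcons. Qed.

Lemma tc_cons0 q c w : (2 <= q)%N -> tc q c (0%N :: w) = tc q (shiftc c) w.
Proof.
move=> q2; rewrite /tc /spec /shiftc /=.
case: w => [|a w] /=.
  by case: q q2 => [|[|q]].
by rewrite eqseq_cons eqxx.
Qed.

Lemma tc_consd q c d w : d != 0%N -> w != [::] -> tc q c (d :: w) = (last d w)%:Z.
Proof.
move=> d0; case: w => // a w _; rewrite /tc /spec /=.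
by rewrite eqseq_cons (negbTE d0).
Qed.

Lemma Pw_last p d I : Pw p (fun w => (last d w)%:Z) I = (valn p I)%:Z.
Proof.
elim: I d => [|e I IH] d; first by rewrite Pw_nil.
by rewrite Pw_cons /= IH PoszD PoszM.
Qed.

Lemma Pw_tc_consd p q c d I : d != 0%N ->
  Pw p (tc q c) (d :: I) = tc q c [:: d] + p%:Z * (valn p I)%:Z.
Proof.
move=> d0; rewrite Pw_cons -(Pw_last p d I); congr (_ + _ * _).
by apply: Pw_ext => w w0; rewrite tc_consd.
Qed.

Lemma Pw_tc_cons0 p q c I : (2 <= q)%N ->
  Pw p (tc q c) (0%N :: I) = p%:Z * Pw p (tc q (shiftc c)) I.
Proof.
move=> q2; rewrite Pw_cons.
have -> : tc q c [:: 0%N] = 0 by rewrite tc_cons0 // /tc /spec /=.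
rewrite add0r; congr (_ * _); apply: Pw_ext => w _; exact: tc_cons0.
Qed.

Lemma neg_claim p q c I k : (2 <= q)%N -> (2 <= p)%N ->
  Pw p (tc q c) I = - (p%:Z ^+ k) -> c k.
Proof.
move=> q2 p2; elim: I c k => [|d I IH] c k.
  rewrite Pw_nil => /eqP; rewrite eq_sym oppr_eq0 expf_eq0 andbC.
  by case: p p2.
case: (eqVneq d 0%N) => [->|d0].
  rewrite Pw_tc_cons0 //; case: k => [|k].
    move=> h; exfalso; move: h; rewrite expr0.
    set X := Pw _ _ _ => h.
    have [X0|X0] : (0 <= X) \/ (X <= -1) by lia.
      have : (0 <= p%:Z * X) by rewrite mulr_ge0.
      lra.
    have : (p%:Z * X <= p%:Z * -1) by rewrite ler_pM2l //; lia.
    have : (2 <= p%:Z) by lia.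
    lra.
  rewrite exprS => /eqP; rewrite -mulrN (inj_eq (mulfI _)); last first.
    by apply/eqP; lia.
  by move/eqP/IH.
rewrite Pw_tc_consd //.
have v0 : (0 <= (valn p I)%:Z) by [].
rewrite /tc /spec /=; case: ifP => [/andP[_ c0]|_].
  case: k => // k; rewrite exprS => h; exfalso.
  have pk : (1 <= p%:Z ^+ k) by rewrite exprn_ege1 //; lia.
  have : (p%:Z * (valn p I)%:Z = 1 - p%:Z * p%:Z ^+ k) by rewrite -h; ring.
  move=> h2; have : (0 <= p%:Z * (valn p I)%:Z) by rewrite mulr_ge0.
  rewrite h2 subr_ge0 => h3.
  have : (p%:Z <= p%:Z * p%:Z ^+ k) by rewrite ler_peMr.
  have : (2 <= p%:Z) by lia.
  lra.
move=> h; exfalso.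
have : (0 <= p%:Z * (valn p I)%:Z) by rewrite mulr_ge0.
have : (1 <= (d%:Z)) by move: d0; lia.
have : (0 < p%:Z ^+ k) by rewrite exprn_gt0 //; lia.
rewrite /last_digit /= in h.
lra.
Qed.

Lemma Pw_special p q c k : (2 <= q)%N ->
  Pw p (tc q c) (nseq k 0%N ++ [:: q.-1]) =
  if c k then - (p%:Z ^+ k) else (q.-1)%:Z * p%:Z ^+ k.
Proof.
move=> q2; elim: k c => [|k IH] c /=.
  rewrite Pw_tc_consd; last by case: q q2 => [|[|q]].
  rewrite /= mulr0 addr0 expr0 mulr1 /tc /spec /= eqxx /=.
  by case: (c 0%N).
rewrite Pw_tc_cons0 // IH /shiftc exprS; case: (c k.+1); ring.
Qed.

Lemma last_nseqS (x y : nat) k : last x (nseq k.+1 y) = y.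
Proof. by elim: k x => // k IH x /=; rewrite -IH. Qed.

Lemma tc_tail q c I k : (2 <= q)%N -> tc q c (I ++ nseq k.+1 0%N) = 0.
Proof.
move=> q2; have hl : last_digit (I ++ nseq k.+1 0%N) = 0%N.
  by rewrite /last_digit last_cat last_nseqS.
rewrite /tc; case: ifP => [/last_spec|_]; last by rewrite hl.
by rewrite hl; case: q q2 => [|[|q]].
Qed.

Lemma digits_fuel q f1 f2 n : (2 <= q)%N -> (n <= f1)%N -> (n <= f2)%N ->
  digits_aux q f1 n = digits_aux q f2 n.
Proof.
move=> q2; elim: f1 f2 n => [|f1 IH] [|f2] n /=.
- by [].
- by rewrite leqn0 => /eqP -> _.
- by move=> _; rewrite leqn0 => /eqP ->.
move=> h1 h2; case: eqP => // /eqP n0; congr (_ :: _); apply: IH.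
  have : (n %/ q < n)%N by rewrite ltn_Pdiv // lt0n.
  lia.
have : (n %/ q < n)%N by rewrite ltn_Pdiv // lt0n.
lia.
Qed.

Lemma digits0 q : digits q 0 = [::].
Proof. by []. Qed.

Lemma digitsE q n : (2 <= q)%N -> (0 < n)%N ->
  digits q n = (n %% q)%N :: digits q (n %/ q).
Proof.
move=> q2; case: n => // n _; rewrite /digits /=; congr (_ :: _).
apply: digits_fuel => //.
have : (n.+1 %/ q < n.+1)%N by rewrite ltn_Pdiv.
lia.
Qed.

Lemma digits_special q k : (2 <= q)%N ->
  digits q (q.-1 * q ^ k)%N = nseq k 0%N ++ [:: q.-1].
Proof.
move=> q2; elim: k => [|k IH].
  rewrite expn0 muln1 digitsE //; last by lia.
  rewrite modn_small; last by lia.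
  by rewrite divn_small //; lia.
rewrite digitsE //; last by rewrite muln_gt0 expn_gt0; apply/andP; split; lia.
rewrite expnS mulnCA modnMr.
rewrite mulKn; last by lia.
by rewrite IH.
Qed.

Lemma digits_1 q k : (2 <= q)%N -> digits q (q * k + 1)%N = 1%N :: digits q k.
Proof.
move=> q2; rewrite digitsE //; last by lia.
rewrite (mulnC q k) modnMDl modn_small; last by lia.
rewrite divnMDl; last by lia.
by rewrite (divn_small (_ : 1 < q)%N) ?addn0.
Qed.

Definition sd (p q k : nat) : nat := valn p (digits q k).

Lemma sdE p q k : (2 <= q)%N -> sd p q k = (k %% q + p * sd p q (k %/ q))%N.
Proof.
move=> q2; rewrite /sd; case: k => [|k]; first by rewrite mod0n div0n /= muln0.
by rewrite digitsE.
Qed.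

Lemma amodp (p a x : nat) : (a < p)%N -> ((a + p * x) %% p = a /\ (a + p * x) %/ p = x)%N.
Proof.
move=> ap; split; first by rewrite mulnC addnC modnMDl modn_small.
by rewrite mulnC addnC divnMDl ?divn_small ?addn0 //; lia.
Qed.

Lemma sd_inj p q k1 k2 : (2 <= q)%N -> (q < p)%N -> sd p q k1 = sd p q k2 -> k1 = k2.
Proof.
move=> q2 qp; move: {2}(k1 + k2).+1 (ltnSn (k1 + k2)) => n.
elim: n k1 k2 => // n IH k1 k2 hn.
rewrite (sdE p q k1 q2) (sdE p q k2 q2) => h.
have a1 : (k1 %% q < p)%N by have := ltn_pmod k1 (_ : 0 < q)%N; lia.
have a2 : (k2 %% q < p)%N by have := ltn_pmod k2 (_ : 0 < q)%N; lia.
have [m1 d1] := @amodp p _ (sd p q (k1 %/ q)) a1.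
have [m2 d2] := @amodp p _ (sd p q (k2 %/ q)) a2.
have em : (k1 %% q = k2 %% q)%N by rewrite -m1 -m2 h.
have ed : sd p q (k1 %/ q) = sd p q (k2 %/ q) by rewrite -d1 -d2 h.
case: (posnP (k1 + k2)) => [e0|pos].
  lia.
have l1 : (k1 %/ q <= k1)%N by apply: leq_div.
have l2 : (k2 %/ q <= k2)%N by apply: leq_div.
have hlt : (k1 %/ q + k2 %/ q < k1 + k2)%N.
  case: (posnP k1) => [z1|p1].
    have : (k2 %/ q < k2)%N by rewrite ltn_Pdiv //; lia.
    lia.
  have : (k1 %/ q < k1)%N by rewrite ltn_Pdiv //; lia.
  lia.
have H : (k1 %/ q = k2 %/ q)%N by apply: (IH _ _ _ ed); lia.
by rewrite (divn_eq k1 q) (divn_eq k2 q) H em.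
Qed.

Lemma sd_lt p q k N : (2 <= q)%N -> (q < p)%N -> (k < q ^ N)%N -> (sd p q k < p ^ N)%N.
Proof.
move=> q2 qp; have q0 : (0 < q)%N := ltnW q2.
elim: N k => [|N IH] k.
  by rewrite expn0; case: k.
move=> hk; rewrite sdE //.
have hx : (k %/ q < q ^ N)%N by rewrite ltn_divLR // mulnC -expnS.
have h2 := IH _ hx.
have h3 : (k %% q < p)%N := ltn_trans (ltn_pmod k q0) qp.
have H : (p * sd p q (k %/ q) + p <= p * p ^ N)%N.
  by rewrite addnC -mulnS leq_mul2l h2 orbT.
rewrite expnS addnC; apply: leq_trans H; by rewrite ltn_add2l.
Qed.

Lemma tc_regular p q c : (2 <= q)%N -> (q < p)%N ->
  regular_mapping p q (tc q c) /\ bounded_ell p q (tc q c).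
Proof.
move=> q2 qp; have qm : q.-1 != 0%N by case: q q2 {qp} => [|[|q]].
split; last first.
  exists 0%N => n _ K; rewrite leqn0 -/(nilp _) ; apply/eqP.
  apply/eqP; rewrite -leqn0 leqNgt -has_count; apply/negP => /hasP[k].
  rewrite mem_iota => /andP[k1 _]; case: k k1 => // k _.
  by rewrite tc_tail // eqxx.
split.
- move=> w /andP[w0 /allP wq]; rewrite /tc; case: ifP => _.
    by split => //; lia.
  have : (last_digit w < q)%N.
    by case: w w0 wq => // a w _ wq; apply: wq; rewrite /last_digit /= mem_last.
  by move=> h; split; lia.
- move=> n n1; rewrite /tc; case: ifP => [/last_spec|_].
    by case: n n1 => // n _; rewrite /last_digit last_nseqS => e; rewrite e eqxx in qm.
  by case: n n1 => // n _; rewrite /last_digit last_nseqS.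
- move=> w _; rewrite /tc; case: ifP => [/last_spec ->|_]; last by rewrite subrr dvdz0.
  have -> : (-1 - (q.-1)%:Z = - q%:Z) by case: q q2 {qp qm} => [|[|q]] //= _; lia.
  by rewrite rpredN dvdzz.
- move=> w _; exists 1%N => l; case: l => // l _; exact: tc_tail.
Qed.

Lemma cantor_nat (g : (nat -> bool) -> nat) : injective g -> False.
Proof.
move=> ginj.
have [h hK] : exists h : nat -> nat -> bool, forall b, h (g b) = b.
  have hex : forall n, exists b0 : nat -> bool, (exists b, g b = n) -> g b0 = n.
    move=> n; have [[b gb]|nb] := pselect (exists b, g b = n).
      by exists b.
    by exists (fun _ => true) => /nb.
  have [h hP] := choice hex.
  by exists h => b; apply: ginj; apply: hP; exists b.
pose d := fun k => ~~ h k k.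
have E := congr1 (fun f => f (g d)) (hK d).
have : h (g d) (g d) = ~~ h (g d) (g d) := E.
by case: (h (g d) (g d)).
Qed.

Lemma lambda_tc (R : realType) p q c n : (2 <= q)%N ->
  lambda_seq R p q (tc q c) n = (Pw p (tc q c) (digits q n))%:~R.
Proof.
move=> q2; rewrite /lambda_seq; case: eqP => [->|_].
  by rewrite digits0 Pw_nil.
set N := size _.
have -> : limn (fun M : nat => \sum_(N <= k < M)
   ((tc q c (digits q n ++ nseq (k - N).+1 0%N))%:~R * (p%:R ^+ k) : R)) = 0.
  rewrite (_ : (fun M : nat => _) = (fun _ => 0)); first by rewrite lim_cst.
  apply/funext => M; apply: big1 => k _; by rewrite tc_tail // mul0r.
rewrite addr0 /Pw rmorph_sum; apply: eq_bigr => j _.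
by rewrite rmorphM /= rmorphXn /=.
Qed.

Lemma powR_pq (R : realType) (p q n : nat) : (1 < p)%N -> (0 < q)%N ->
  ((p%:R ^+ n) `^ (ln (q%:R : R) / ln (p%:R : R)) : R) = q%:R ^+ n.
Proof.
move=> p1 q0.
rewrite -powR_mulrn ?ler0n // powRAC powR_mulrn ?powR_ge0 //; congr (_ ^+ n).
have lp : ln (p%:R : R) != 0 by rewrite gt_eqF // ln_gt0 // ltr1n.
rewrite /powR pnatr_eq0 (_ : (p == 0)%N = false); last by case: p p1 lp.
by rewrite divfK // lnK // posrE ltr0n.
Qed.

Lemma lambda_1 (R : realType) p q c k : (2 <= q)%N -> c 0%N = false ->
  lambda_seq R p q (tc q c) (q * k + 1)%N = (1 + p * sd p q k)%N%:R.
Proof.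
move=> q2 c0; rewrite lambda_tc // digits_1 // Pw_tc_consd //.
have -> : tc q c [:: 1%N] = 1.
  by rewrite /tc /spec /= c0 andbF.
by rewrite rmorphD rmorph1 rmorphM /= natrD natrM !pmulrn.
Qed.

Lemma count_lb (R : realType) p q c N : (2 <= q)%N -> (q < p)%N -> c 0%N = false ->
  (((q ^ N)%N%:R)%:E <= \esum_(y in @Lambda R p q (tc q c) `&`
      [set y : R | (0 - (p ^ N.+1)%N%:R < y < 0 + (p ^ N.+1)%N%:R)%R]) (1 : \bar R))%E.
Proof.
move=> q2 qp c0.
pose f := fun k : nat => ((1 + p * sd p q k)%N%:R : R).
have finj : set_inj `I_(q ^ N) f.
  move=> a b _ _ /eqP; rewrite /f eqr_nat eqn_add2l eqn_mul2l => /orP[/eqP p0|/eqP e].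
    by move: qp; rewrite p0.
  exact: sd_inj e.
apply: esum_ge; exists (f @` `I_(q ^ N)).
  split; first exact/finite_image/finite_II.
  move=> y [k /= kN <-]; split.
    by exists (q * k + 1)%N => //; rewrite lambda_1.
  have hs := @sd_lt p q k N q2 qp kN.
  have H : (1 + p * sd p q k < p ^ N.+1)%N.
    have : (p * sd p q k + p <= p * p ^ N)%N by rewrite addnC -mulnS leq_mul2l hs orbT.
    rewrite expnS; lia.
  rewrite /= sub0r add0r /f; apply/andP; split.
    by apply: (lt_le_trans _ (ler0n _ _)); rewrite oppr_lt0 ltr0n expn_gt0; apply/orP; left; lia.
  by rewrite ltr_nat.
rewrite fsbig_image // -fsbig_ord sumEFin sumr_const card_ord.
by [].
Qed.

Lemma density_pos (R : realType) p q c : (2 <= q)%N -> (q < p)%N -> c 0%N = false ->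
  (0 < upper_beurling_density (ln (q%:R : R) / ln (p%:R : R)) (@Lambda R p q (tc q c)))%E.
Proof.
move=> q2 qp c0; rewrite /upper_beurling_density.
have q0 : (0 < q%:R :> R) by rewrite ltr0n; lia.
apply: (@lt_le_trans _ _ ((q%:R : R)^-1)%:E); first by rewrite lte_fin invr_gt0.
apply: le_ereal_inf_tmp => _ [V [M [Mr HM]] <-].
set n := Num.bound `|M|.
have hM : M < (p ^ n.+1)%N%:R.
  have h1 := archi_boundP (normr_ge0 M).
  have h2 : (n < p ^ n.+1)%N by have := @ltn_expl p n.+1 ltac:(lia); lia.
  apply: (le_lt_trans (real_ler_norm Mr)); apply: (lt_trans h1).
  by rewrite ltr_nat.
apply: le_trans; last first.
  by apply: ereal_sup_ubound; exists (p ^ n.+1)%N%:R => //; exact: HM.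
apply: le_trans; last first.
  by apply: ereal_sup_ubound; exists 0.
have hp : ((p ^ n.+1)%N%:R : R) `^ (ln (q%:R : R) / ln (p%:R : R)) = q%:R ^+ n.+1.
  by rewrite natrX powR_pq //; lia.
rewrite hp.
apply: le_trans; last first.
  apply: lee_wpmul2r; last exact: count_lb.
  by rewrite lee_fin invr_ge0 exprn_ge0 // ltW.
rewrite -EFinM lee_fin natrX exprS invfM mulrCA mulfV ?mulr1 //.
by rewrite expf_neq0 // gt_eqF.
Qed.

Lemma tc_b_imp q b1 b2 m : (2 <= q)%N -> tc q (cb b1) = tc q (cb b2) -> b1 m -> b2 m.
Proof.
move=> q2 e h1.
have := @Pw_special 2 q (cb b1) m.+1 q2; rewrite /= h1 e.
by move/(neg_claim _ _ _ _ _ q2 (leqnn 2)).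
Qed.

Lemma lam_distinct (R : realType) p q b1 b2 m : (2 <= q)%N -> (q < p)%N ->
  b1 m = true -> b2 m = false ->
  @Lambda R p q (tc q (cb b1)) <> @Lambda R p q (tc q (cb b2)).
Proof.
move=> q2 qp h1 h2 E.
have p2 : (2 <= p)%N by lia.
have : @Lambda R p q (tc q (cb b1)) ((- (p%:Z ^+ m.+1))%:~R).
  exists (q.-1 * q ^ m.+1)%N => //.
  by rewrite lambda_tc // digits_special // Pw_special //= h1.
rewrite E => -[n _]; rewrite lambda_tc // => /intr_inj.
by move/(neg_claim _ _ _ _ _ q2 p2); rewrite /= h2.
Qed.

Theorem theorem1p6 (R : realType) (p q : nat) :
  (2 <= q)%N -> (q < p)%N -> (q %| p)%N ->
  let s : R := ln (q%:R : R) / ln (p%:R : R) in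
  exists S : set (seq nat -> int),
    ~ countable S /\
    (forall tau, S tau -> regular_mapping p q tau /\ bounded_ell p q tau) /\
    (forall tau1 tau2, S tau1 -> S tau2 -> tau1 <> tau2 ->
        @Lambda R p q tau1 <> @Lambda R p q tau2) /\
    (forall tau, S tau -> (0 < upper_beurling_density s (@Lambda R p q tau))%E).
Proof.
move=> q2 qp _ s.
exists [set tc q (cb b) | b in [set: nat -> bool]].
split.
  move=> /countable_injP [f finj].
  apply: (@cantor_nat (fun b => f (tc q (cb b)))) => b1 b2 e.
  have e2 : tc q (cb b1) = tc q (cb b2).
    by apply: finj => //; rewrite inE; [exists b1|exists b2].
  apply/funext => m; apply/idP/idP; [exact: (@tc_b_imp q b1 b2 m q2 e2)|exact: (@tc_b_imp q b2 b1 m q2 (esym e2))].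
split.
  by move=> _ [b _ <-]; exact: tc_regular.
split.
  move=> _ _ [b1 _ <-] [b2 _ <-] ne.
  have [m hm] : exists m, b1 m != b2 m.
    apply/not_existsP => hn; apply: ne; congr (tc q (cb _)).
    by apply/funext => m; apply/eqP; apply/negPn/negP; apply: hn.
  move: hm; case h1: (b1 m); case h2: (b2 m) => // _.
    exact: (@lam_distinct R p q b1 b2 m q2 qp h1 h2).
  by move=> E; apply: (@lam_distinct R p q b2 b1 m q2 qp h2 h1); rewrite E.
by move=> _ [b _ <-]; exact: density_pos.
Qed.
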